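(* Let $p:[0,1]\to[0,1]$ be continuous and non-increasing, let $r$ be a positive integer and $\mathbf{g}=(g_1,\dots,g_r)\in[0,1]^r$. For $n$ a multiple of $r$ with $g_in/r$ integers, let $S\subseteq\{1,\dots,n\}$ be random with the events $\{j\in S\}$ independent and $\mathbf{P}(j\in S)=p(j/n)$, let $I_i=\{(i-1)n/r+1,\dots,in/r\}$, and let $Q_n$ be the probability that $|S\cap I_i|=g_in/r$ for every $i=1,\dots,r$. Let $\bar p_i=r\int_{(i-1)/r}^{i/r}p(u)du$. If $\frac1r\sum_{i=1}^rD(g_i\|\bar p_i)>\epsilon$ for some $\epsilon>0$, then there exist $n_0$ and a constant $b(\epsilon)>0$ such that $Q_n<e^{-b(\epsilon)n}$ for all such $n>n_0$.
   Context: $D(q\|p)=q\log\frac qp+(1-q)\log\frac{1-q}{1-p}$ is the Kullback–Leibler divergence between Bernoulli distributions with success probabilities $q$ and $p$. ($Q_n$ is the probability that the random support, viewed as a face of the weighted cross-polytope, lies in the class of faces having exactly $g_in/r$ vertex indices in the $i$-th block for each $i$.) *)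

(* Defs.v *)
From HB Require Import structures.
From mathcomp Require Import all_boot all_order all_algebra.
From mathcomp Require Import all_classical all_reals all_analysis.
Unset Strict Implicit. Unset Printing Implicit Defensive.
Import Order.TTheory GRing.Theory Num.Theory.
Local Open Scope ring_scope.

(* Bernoulli KL divergence D(q||p), extended-real valued, with the standard
   conventions 0 log(0/x) = 0 and a log(a/0) = +oo for a > 0. *)
Definition KLbern {R : realType} (q p : R) : \bar R :=
  ((if q == 0%R then 0%E else if p == 0%R then +oo%E else (q * ln (q / p))%:E)
   + (if q == 1%R then 0%E else if p == 1%R then +oo%E
      else ((1 - q) * ln ((1 - q) / (1 - p)))%:E))%E.

(* Elements j : 'I_n represent the indices j+1 in {1,...,n}.
   Block i : 'I_r (0-based) is I_{i+1} = {i*(n/r)+1, ..., (i+1)*(n/r)},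
   i.e. 0-based j with i*(n/r) <= j < (i+1)*(n/r). *)
Definition block (n r : nat) (i : 'I_r) : {set 'I_n} :=
  [set j : 'I_n | (i * (n %/ r) <= j) && (j < i.+1 * (n %/ r))]%N.

(* Probability that the random set S equals a given set A, when the events
   {j in S} are independent with P(j in S) = p(j/n) (j in 1..n). *)
Definition set_prob {R : realType} (p : R -> R) (n : nat) (A : {set 'I_n}) : R :=
  \prod_(j : 'I_n) (if j \in A then p ((j.+1)%:R / n%:R) else 1 - p ((j.+1)%:R / n%:R)).

Definition Qn {R : realType} (p : R -> R) (r : nat) (g : 'I_r -> R) (n : nat) : R :=
  \sum_(A : {set 'I_n} |
         [forall i : 'I_r, (#|A :&: block n r i|)%:R == g i * (n %/ r)%:R])
    set_prob p n A.

Definition pbar {R : realType} (p : R -> R) (r : nat) (i : 'I_r) : R :=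
  r%:R * Rintegral lebesgue_measure
           `[(i%:R / r%:R), (i.+1%:R / r%:R)]%classic p.

(* Main.v *)
Require Import Defs.
From HB Require Import structures.
From mathcomp Require Import all_boot all_order all_algebra.
From mathcomp Require Import all_classical all_reals all_analysis.
From mathcomp Require Import ring lra.
Import Order.TTheory GRing.Theory Num.Theory.
Import numFieldNormedType.Exports.
Local Open Scope classical_set_scope.
Local Open Scope ring_scope.


Lemma sum_set_prod (R : realType) (T : finType) (F : T -> bool -> R) :
  \sum_(A : {set T}) \prod_(j : T) F j (j \in A) = \prod_(j : T) (F j true + F j false).
Proof.
under eq_bigr => j _ do rewrite -(big_bool _ (F j)).
rewrite bigA_distr_bigA /=.
rewrite (reindex (fun A : {set T} => [ffun x => x \in A])) /=.
  by apply: eq_bigr => A _; apply: eq_bigr => j _; rewrite ffunE.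
exists (fun f : {ffun T -> bool} => [set x | f x]%SET) => [A _|f _].
  by apply/setP => x; rewrite inE ffunE.
by apply/ffunP => x; rewrite ffunE inE.
Qed.

Lemma chernoff (R : realType) (n : nat) (ps : 'I_n -> R) (B : {set 'I_n}) (k u : R)
  (P : pred {set 'I_n}) :
  (forall j, 0 <= ps j <= 1) ->
  (forall A, P A -> #|A :&: B|%:R = k) ->
  \sum_(A | P A) \prod_j (if j \in A then ps j else 1 - ps j)
   <= expR (- (u * k) + (expR u - 1) * \sum_(j in B) ps j).
Proof.
move=> ps01 PA.
pose w j := if j \in B then expR u else 1.
have key (A : {set 'I_n}) : \prod_j (if j \in A then ps j else 1 - ps j) * expR (u * #|A :&: B|%:R)
   = \prod_j (if j \in A then ps j * w j else 1 - ps j).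
  rewrite mulr_natr -sumr_const expR_sum [X in _ * X]big_mkcond /= -big_split /=.
  apply: eq_bigr => j _; rewrite /w !inE.
  by case: (j \in A); case: (j \in B); rewrite /= ?mulr1.
have tnn (A : {set 'I_n}) : 0 <= \prod_j (if j \in A then ps j else 1 - ps j).
  apply: prodr_ge0 => j _; have /andP[h0 h1] := ps01 j.
  by case: (j \in A) => //; rewrite subr_ge0.
apply: (@le_trans _ _ (\sum_(A : {set 'I_n}) (\prod_j (if j \in A then ps j else 1 - ps j) *
     expR (u * #|A :&: B|%:R) * expR (- (u * k))))).
  rewrite [X in _ <= X](bigID P) /= -[X in X <= _]addr0; apply: lerD.
    apply: ler_sum => A HA; rewrite (PA A HA) -mulrA -expRD subrr expR0 mulr1 //.
  by apply: sumr_ge0 => A _; rewrite mulr_ge0 ?expR_ge0 // mulr_ge0 ?expR_ge0.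
under eq_bigr => A _ do rewrite key.
rewrite -mulr_suml.
rewrite (@sum_set_prod R _ (fun j b => if b then ps j * w j else 1 - ps j)) /=.
rewrite expRD mulrC; apply: ler_wpM2l; first exact: expR_ge0.
apply: (@le_trans _ _ (\prod_j expR (ps j * (w j - 1)))).
  apply: ler_prod => j _; have /andP[h0 h1] := ps01 j.
  apply/andP; split.
    by rewrite addr_ge0 ?subr_ge0 // mulr_ge0 // /w; case: (j \in B); rewrite ?expR_ge0.
  apply: le_trans (expR_ge1Dx _); rewrite le_eqVlt; apply/orP; left; apply/eqP; ring.
rewrite -expR_sum le_eqVlt; apply/orP; left; apply/eqP; congr expR.
rewrite mulr_sumr [in RHS]big_mkcond /=; apply: eq_bigr => j _; rewrite /w.
by case: (j \in B); rewrite ?subrr ?mulr0 // mulrC.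
Qed.


Lemma expo_a (R : realType) (q g d : R) : 0 <= q -> g <= 1 -> 0 < d -> d <= 1/2 ->
  d <= g - q -> (expR (d/4) - 1) * q - (d/4) * g <= - (d^+2/8).
Proof.
move=> q0 g1 d0 d12 dgq.
set v := d/4; set E := expR v.
have v0 : 0 < v by rewrite /v divr_gt0.
have h1 : 1 + v <= E := expR_ge1Dx v.
have h2 : E * (1 - v) <= 1.
  have h := expR_ge1Dx (- v).
  have E0 : 0 < E := expR_gt0 v.
  have : E * (1 - v) <= E * expR (- v) by apply: ler_wpM2l; lra.
  by rewrite /E -expRD subrr expR0.
have h3 : E - 1 - v <= 2 * v^+2.
  have hv : v <= 1/8 by rewrite /v; lra.
  nra.
have hE : 0 <= E - 1 - v by lra.
have : (E - 1) * q <= (E - 1) * (g - d) by apply: ler_wpM2l; lra.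
have : g * (E - 1 - v) <= E - 1 - v.
  have g0 : g * (E - 1 - v) <= 1 * (E - 1 - v) by apply: ler_wpM2r => //.
  by rewrite mul1r in g0.
rewrite /v in h3 h1 hE |- * => *.
nra.
Qed.

Lemma expo_b (R : realType) (q g d : R) : 0 <= g -> g <= 1 -> 0 < d -> d <= 1/2 ->
  d <= q - g -> (expR (- (d/4)) - 1) * q + (d/4) * g <= - (d^+2/8).
Proof.
move=> g0 g1 d0 d12 dgq.
set v := d/4; set F := expR (- v).
have v0 : 0 < v by rewrite /v divr_gt0.
have h1 : 1 - v <= F by have := expR_ge1Dx (- v).
have h2 : F * (1 + v) <= 1.
  have := expR_ge1Dx v => h.
  have F0 : 0 < F := expR_gt0 _.
  have : F * (1 + v) <= F * expR v by apply: ler_wpM2l; lra.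
  by rewrite /F -expRD addNr expR0.
have h3 : F - 1 + v <= v^+2 by nra.
have hF : F - 1 <= 0 by nra.
have : (F - 1) * q <= (F - 1) * (g + d) by apply: ler_wnM2l => //; lra.
have : g * (F - 1 + v) <= F - 1 + v.
  have g0' : g * (F - 1 + v) <= 1 * (F - 1 + v) by apply: ler_wpM2r => //; lra.
  by rewrite mul1r in g0'.
rewrite /v in h3 h1 hF |- * => *.
nra.
Qed.

Lemma conclude (R : realType) (Q S g d pb M rr : R) :
  0 < d -> d <= 1/2 -> 0 <= g -> g <= 1 -> 0 <= S -> 0 < M -> 0 < rr ->
  1 < d * M -> 2 * d <= `|g - pb| -> S <= pb * M -> pb * M <= S + 1 ->
  (forall u, Q <= expR (- (u * (g * M)) + (expR u - 1) * S)) ->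
  Q < expR (- (d^+2 / (16 * rr) * (M * rr))).
Proof.
move=> d0 d12 g0 g1 S0 M0 r0 dM hd hS1 hS2 hQ.
have Mi : 0 < M^-1 by rewrite invr_gt0.
set q := S / M.
have Sq : S = q * M by rewrite /q divfK // gt_eqF.
have q0 : 0 <= q by rewrite /q divr_ge0 // ltW.
have hb : - (d^+2 / 8 * M) < - (d^+2 / (16 * rr) * (M * rr)).
  have -> : d^+2 / (16 * rr) * (M * rr) = d^+2 / 16 * M by field; rewrite gt_eqF.
  rewrite ltrN2.
  have dd : 0 < d^+2 by rewrite exprn_gt0.
  have : 0 < d^+2 * M by rewrite mulr_gt0.
  lra.
have hb2 : expR (- (d^+2 / 8 * M)) < expR (- (d^+2 / (16 * rr) * (M * rr))) by rewrite ltr_expR.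
apply: le_lt_trans hb2.
have [hlt|hgt] : g < pb \/ pb < g.
  case: (ltgtP g pb) => h; [by left|by right|].
  by move: hd; rewrite h subrr normr0; lra.
-
  have hd' : 2 * d <= pb - g by move: hd; rewrite ltr0_norm ?subr_lt0 //; lra.
  have qg : d <= q - g.
    have : pb * M <= (q + M^-1) * M by rewrite mulrDl mulVf ?gt_eqF // -Sq.
    rewrite ler_pM2r // => hpq.
    have : M^-1 < d.
      by rewrite -(ltr_pM2r M0) mulVf ?gt_eqF.
    lra.
  have := expo_b _ _ _ _ g0 g1 d0 d12 qg => hX.
  apply: le_trans (hQ (- (d / 4))) _; rewrite ler_expR Sq.
  have -> : - (- (d / 4) * (g * M)) + (expR (- (d / 4)) - 1) * (q * M)
     = M * ((expR (- (d / 4)) - 1) * q + d / 4 * g) by ring.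
  have := ler_wpM2l (ltW M0) hX; nra.
- have hd' : 2 * d <= g - pb by move: hd; rewrite gtr0_norm ?subr_gt0 //.
  have qg : d <= g - q.
    have : q * M <= pb * M by rewrite -Sq.
    rewrite ler_pM2r // => hpq.
    lra.
  have := expo_a _ _ _ _ q0 g1 d0 d12 qg => hX.
  apply: le_trans (hQ (d / 4)) _; rewrite ler_expR Sq.
  have -> : - (d / 4 * (g * M)) + (expR (d / 4) - 1) * (q * M)
     = M * ((expR (d / 4) - 1) * q - d / 4 * g) by ring.
  have := ler_wpM2l (ltW M0) hX; nra.
Qed.


Section Int.
Variable R : realType.
Notation mu := (@lebesgue_measure R).

Lemma int_sub (p : R -> R) (a b : R) :
  {within `[0, 1], continuous p} -> 0 <= a -> b <= 1 ->
  mu.-integrable `[a, b] (EFin \o p).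
Proof.
move=> hc a0 b1.
have := continuous_compact_integrable (@segment_compact R 0 1) hc.
apply: integrableS => //.
by apply: subset_itv; rewrite bnd_simp.
Qed.

Lemma int_cst_itv (c a b : R) : a <= b ->
  Rintegral mu `[a, b] (fun=> c) = c * (b - a).
Proof.
move=> ab; rewrite Rintegral_cst //= lebesgue_measure_itv /=.
case: ifPn => [_|]; first by [].
rewrite lte_fin -leNgt => ba.
have -> : b = a by apply/eqP; rewrite eq_le ab ba.
by rewrite subrr.
Qed.

Lemma int_split (p : R -> R) (a c b : R) :
  {within `[0, 1], continuous p} -> 0 <= a -> a <= c -> c <= b -> b <= 1 ->
  Rintegral mu `[a, b] p = Rintegral mu `[a, c] p + Rintegral mu `[c, b] p.
Proof.
move=> hc a0 ac cb b1.
have := @Rintegral_itvB R p (BLeft a) (BRight b) c (int_sub _ _ _ hc a0 b1).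
rewrite !bnd_simp => /(_ ac cb) h.
rewrite -(@Rintegral_itv_obnd_cbnd R c (BRight b) p); last first.
  have := int_sub _ _ _ hc a0 b1; apply: integrableS => //.
  by apply: subset_itv; rewrite bnd_simp.
rewrite -h; ring.
Qed.


Lemma int_small (p : R -> R) (c e : R) :
  {within `[0, 1], continuous p} ->
  (forall x y, 0 <= x -> x <= y -> y <= 1 -> p y <= p x) ->
  0 <= c -> c <= e -> e <= 1 ->
  p e * (e - c) <= Rintegral mu `[c, e] p <= p c * (e - c).
Proof.
move=> hc hm c0 ce e1.
have hcst (k : R) : {within (`[0, 1] : set R), continuous (fun _ : R => k)}.
  by apply: continuous_subspaceT => x; exact: cst_continuous.
rewrite -(int_cst_itv (p e) _ _ ce) -(int_cst_itv (p c) _ _ ce); apply/andP; split; apply: le_Rintegral => //.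
- exact: int_sub.
- exact: int_sub.
- move=> x; rewrite /= in_itv /= => /andP[cx xe]; apply: hm => //; exact: le_trans cx.
- exact: int_sub.
- exact: int_sub.
- move=> x; rewrite /= in_itv /= => /andP[cx xe]; apply: hm => //; exact: le_trans e1.
Qed.

Lemma int_bounds (p : R -> R) (a h : R) (k : nat) :
  {within `[0, 1], continuous p} ->
  (forall x y, 0 <= x -> x <= y -> y <= 1 -> p y <= p x) ->
  0 <= a -> 0 < h -> a + k%:R * h <= 1 ->
  \sum_(l < k) p (a + l.+1%:R * h) * h <= Rintegral mu `[a, a + k%:R * h] p
   <= \sum_(l < k) p (a + l%:R * h) * h.
Proof.
move=> hc hm a0 h0; elim: k => [|k IH] hk.
  rewrite !big_ord0 mul0r addr0 set_itv1 Rintegral_set1; lra.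
have hk' : a + k%:R * h <= 1.
  apply: le_trans hk; rewrite lerD2l ler_wpM2r ?ler_nat //; exact: ltW.
have h1 : a <= a + k%:R * h by rewrite lerDl mulr_ge0 // ltW.
have h2 : a + k%:R * h <= a + k.+1%:R * h.
  by rewrite lerD2l ler_wpM2r ?ler_nat // ltW.
rewrite (int_split _ _ _ _ hc a0 h1 h2 hk) !big_ord_recr /=.
have := int_small _ _ _ hc hm (le_trans a0 h1) h2 hk.
have -> : a + k.+1%:R * h - (a + k%:R * h) = h by rewrite -addn1 natrD; ring.
move: (IH hk') => /andP[i1 i2] /andP[s1 s2].
apply/andP; split; apply: lerD => //.
Qed.

End Int.


Lemma block_sum (R : realType) (f : nat -> R) (n a m : nat) :
  (a + m <= n)%N ->
  \sum_(j < n | ((a <= j) && (j < a + m))%N) f j = \sum_(l < m) f (l + a)%N.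
Proof.
move=> amn.
rewrite -(big_mkord (fun j => (a <= j) && (j < a + m))%N f).
have -> : \sum_(0 <= j < n | ((a <= j) && (j < a + m))%N) f j
        = \sum_(a <= j < a + m) f j.
  rewrite (big_nat_widen _ _ _ _ _ amn) (big_nat_widenl _ _ _ _ _ (leq0n a)).
  by apply: eq_bigl => j; rewrite andbC.
rewrite -{1}(add0n a) big_addn.
by rewrite addKn big_mkord.

Qed.

Lemma KLbern_xx (R : realType) (x : R) : KLbern x x = 0%E.
Proof.
rewrite /KLbern; case: eqP => [_|/eqP x0]; case: eqP => [_|/eqP x1];
  rewrite ?(negbTE x0) ?(negbTE x1) ?divff ?subr_eq0 1?eq_sym ?ln1 ?mulr0 ?adde0 //.
all: by rewrite eq_sym.
Qed.

Theorem lemma5 (R : realType) (p : R -> R) (r : nat) (g : 'I_r -> R) (eps : R) :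
  {within `[0, 1]%classic, continuous p} ->
  (forall x, 0 <= x <= 1 -> 0 <= p x <= 1) ->
  (forall x y, 0 <= x -> x <= y -> y <= 1 -> p y <= p x) ->
  (0 < r)%N ->
  (forall i, 0 <= g i <= 1) ->
  0 < eps ->
  ((r%:R^-1)%:E * (\sum_(i < r) KLbern (g i) (pbar p r i)) > eps%:E)%E ->
  exists (n0 : nat) (b : R), 0 < b /\
    forall n : nat, (n0 < n)%N -> (r %| n)%N ->
      (forall i, exists k : nat, g i * (n %/ r)%:R = k%:R) ->
      Qn p r g n < expR (- (b * n%:R)).
Proof.
move=> hc p01 hm r0 g01 eps0 hKL.
have [i0 hi0] : exists i0, g i0 != pbar p r i0.
  case: (pickP (fun i => g i != pbar p r i)) => [i0 hi0|h]; first by exists i0.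
  exfalso.
  have hs : (\sum_(i < r) KLbern (g i) (pbar p r i) = 0)%E.
    by apply: big1 => i _; move: (h i) => /= /negbFE/eqP ->; apply: KLbern_xx.
  by move: hKL; rewrite hs mule0 lte_fin ltNge (ltW eps0).
set pb := pbar p r i0.
set del := `|g i0 - pb|.
have del0 : 0 < del by rewrite normr_gt0 subr_eq0.
set d := Num.min del (1/2) / 2.
have mn1 : Num.min del (1/2) <= del by rewrite ge_min lexx.
have mn2 : Num.min del (1/2) <= 1/2 by rewrite ge_min lexx orbT.
have mn0 : 0 < Num.min del (1/2) by rewrite lt_min del0 /=; lra.
have d0 : 0 < d by rewrite /d; lra.
have d12 : d <= 1/2 by rewrite /d; lra.
have dd : 2 * d <= del by rewrite /d; lra.
set N := (Num.trunc (d^-1)).+1.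
have hN : d^-1 < N%:R by apply: truncnS_gt.
have rR : 0 < r%:R :> R by rewrite ltr0n.
exists (r * N)%N, (d^+2 / (16 * r%:R)); split.
  by rewrite divr_gt0 ?exprn_gt0 // mulr_gt0.
move=> n hn hrn _.
set m := (n %/ r)%N.
have nE : n = (m * r)%N by rewrite divnK.
have hNm : (N < m)%N by rewrite -(ltn_pmul2l r0) [(r * m)%N]mulnC -nE.
have m0 : (0 < m)%N by apply: leq_ltn_trans hNm.
have mR : 0 < m%:R :> R by rewrite ltr0n.
have nR : n%:R = m%:R * r%:R :> R by rewrite nE natrM.
have nR0 : 0 < n%:R :> R by rewrite nR mulr_gt0.
have dM : 1 < d * m%:R.
  have : d^-1 < m%:R by apply: lt_le_trans hN _; rewrite ler_nat ltnW.
  by rewrite -(ltr_pM2l d0) mulfV ?gt_eqF.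
set ps := fun j : 'I_n => p (j.+1%:R / n%:R).
have ps01 j : 0 <= ps j <= 1.
  apply: p01; rewrite divr_ge0 ?ler0n //= ler_pdivrMr // mul1r ler_nat.
  exact: ltn_ord.
have hQ u : Qn p r g n <= expR (- (u * (g i0 * m%:R)) + (expR u - 1) * \sum_(j in block n r i0) ps j).
  rewrite /Qn /set_prob.
  apply: (@chernoff R n ps (block n r i0) (g i0 * m%:R) u
    (fun A : {set 'I_n} => [forall i : 'I_r, (#|A :&: block n r i|)%:R == g i * (n %/ r)%:R]) ps01).
  by move=> A /forallP /(_ i0) /eqP.
have ilt : (i0 < r)%N := ltn_ord i0.
have hle : (i0 * m + m <= n)%N by rewrite nE addnC -mulSn [(m * r)%N]mulnC leq_mul2r ilt orbT.
have HS : \sum_(j in block n r i0) ps j = \sum_(l < m) p ((l + i0 * m).+1%:R / n%:R).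
  rewrite /block; under eq_bigl => j do rewrite inE.
  rewrite mulSn [(m + _)%N]addnC.
  rewrite -/m; exact: (@block_sum R (fun j : nat => p (j.+1%:R / n%:R)) n (i0 * m) m hle).
set a := i0%:R / r%:R : R.
set h := n%:R^-1 : R.
have a0 : 0 <= a by rewrite divr_ge0 ?ler0n.
have h0 : 0 < h by rewrite invr_gt0.
have amh : a + m%:R * h = i0.+1%:R / r%:R.
  rewrite /a /h nR -addn1 natrD; field.
  by rewrite !gt_eqF.
have amh1 : a + m%:R * h <= 1 by rewrite amh ler_pdivrMr // mul1r ler_nat.
have := int_bounds _ _ _ _ _ hc hm a0 h0 amh1.
rewrite amh -!mulr_suml => /andP[I1 I2].
set Slow := \sum_(l < m) p (a + l.+1%:R * h).
set Sup := \sum_(l < m) p (a + l%:R * h).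
have HS2 : \sum_(l < m) p ((l + i0 * m).+1%:R / n%:R) = Slow.
  apply: eq_bigr => l _; congr p; rewrite /a /h nR -addn1 !natrD natrM; field.
  by rewrite !gt_eqF.
have tel : Sup + p (a + m%:R * h) = p (a + 0%:R * h) + Slow.
  have e1 := big_ord_recr m (fun l : 'I_m.+1 => p (a + (l : nat)%:R * h)).
  have e2 := big_ord_recl m (fun l : 'I_m.+1 => p (a + (l : nat)%:R * h)).
  rewrite /= in e1 e2.
  rewrite /Sup /Slow -e1 e2; congr (_ + _); apply: eq_bigr => l _; by rewrite lift0.
have am : a <= a + m%:R * h by rewrite lerDl mulr_ge0 ?ler0n // ltW.
have pa1 : p (a + 0%:R * h) <= 1.
  have : 0 <= a + 0%:R * h <= 1.
    by rewrite mul0r addr0 a0 /=; apply: le_trans am amh1.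
  by move/p01 => /andP[].
have pam0 : 0 <= p (a + m%:R * h).
  have : 0 <= a + m%:R * h <= 1 by rewrite amh1 andbT; apply: le_trans a0 am.
  by move/p01 => /andP[].
have Slow0 : 0 <= Slow.
  apply: sumr_ge0 => l _.
  have : 0 <= a + l.+1%:R * h <= 1.
    apply/andP; split; first by rewrite addr_ge0 // mulr_ge0 ?ler0n // ltW.
    apply: le_trans amh1; rewrite lerD2l; apply: ler_wpM2r; [exact: ltW | rewrite ler_nat; exact: ltn_ord].
  by move/p01 => /andP[].
have epb : pb * m%:R = Rintegral lebesgue_measure `[a, i0.+1%:R / r%:R] p * n%:R.
  by rewrite /pb /pbar nR; ring.
have hS1 : Slow <= pb * m%:R.
  rewrite epb; have := ler_wpM2r (ltW nR0) I1.
  by rewrite -mulrA mulVf ?gt_eqF // mulr1.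
have hS2 : pb * m%:R <= Slow + 1.
  rewrite epb; have := ler_wpM2r (ltW nR0) I2.
  rewrite -mulrA mulVf ?gt_eqF // mulr1 => H.
  have eS : Sup = \sum_(i < m) p (a + i%:R * h) by [].
  rewrite -eS in H; lra.
have := @conclude R _ _ (g i0) _ pb _ _ d0 d12 _ _ Slow0 mR rR dM _ hS1 hS2 _.
rewrite nR; apply.
- by case/andP: (g01 i0).
- by case/andP: (g01 i0).
- exact: dd.
- by move=> u; rewrite -HS2 -HS.
Qed.
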